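(* Let $\Sigma\in\mathbb{R}^{p\times p}$ be positive definite and suppose $\Sigma=(I-B_0)^{-T}\Omega_0(I-B_0)^{-1}$ for some $B_0\in\mathbb{D}$ and $\Omega_0=\omega_0^2I$ with $\omega_0>0$. Then $B_0$ is the unique minimum-trace DAG, i.e. $B_0=\tilde B(\pi_0)$ for every $\pi_0\in\arg\min_\pi\operatorname{tr}\tilde\Omega(\pi)$.
   Context: $\mathbb{D}$ is the set of real $p\times p$ matrices whose directed graph (edge $i\to j$ iff $b_{ij}\ne0$) is acyclic. For a permutation $\pi$ of $[p]$, $(P_\pi A)_{ij}=a_{\pi(i)\pi(j)}$. For each $\pi$, write uniquely $P_\pi\Sigma^{-1}=(I-L)D^{-1}(I-L)^T$ with $L$ strictly lower triangular and $D$ diagonal with positive diagonal, and set $\tilde B(\pi)=P_{\pi^{-1}}L$, $\tilde\Omega(\pi)=P_{\pi^{-1}}D$. A minimum-trace permutation is any $\pi_0\in\arg\min_\pi\operatorname{tr}\tilde\Omega(\pi)$ and $\tilde B(\pi_0)$ is a minimum-trace DAG. *)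

(* Defs.v *)
From Stdlib Require Import ClassicalEpsilon.
From mathcomp Require Import all_boot all_order all_algebra all_fingroup.
From mathcomp Require Import reals.
Set Implicit Arguments. Unset Strict Implicit. Unset Printing Implicit Defensive.
Import Order.TTheory GRing.Theory Num.Theory.
Local Open Scope ring_scope.

Section Defs.
Variables (R : realType) (p : nat).

(* The set D: the directed graph (edge i -> j iff b_ij <> 0) is acyclic,
   i.e. no edge i -> j can be closed into a cycle by a path j ~> i
   (this also excludes self-loops b_ii <> 0). *)
Definition is_DAG (B : 'M[R]_p) : Prop :=
  forall i j : 'I_p, B i j != 0 -> ~~ connect (fun a b => B a b != 0) j i.

Definition permute (pi : 'S_p) (A : 'M[R]_p) : 'M[R]_p :=
  \matrix_(i, j) A (pi i) (pi j).

Definition posdef (S : 'M[R]_p) : Prop :=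
  S^T = S /\ forall x : 'cV[R]_p, x != 0 -> 0 < (x^T *m S *m x) 0 0.

Definition strictly_lower (L : 'M[R]_p) : Prop :=
  forall i j : 'I_p, (i <= j)%N -> L i j = 0.

Definition pos_diag (D : 'M[R]_p) : Prop :=
  is_diag_mx D /\ forall i : 'I_p, 0 < D i i.

Definition is_LDL (Sigma : 'M[R]_p) (pi : 'S_p) (L D : 'M[R]_p) : Prop :=
  [/\ strictly_lower L, pos_diag D &
      permute pi (invmx Sigma) = (1%:M - L) *m invmx D *m (1%:M - L)^T].

(* The (unique, for positive definite Sigma) pair (L, D), chosen by epsilon. *)
Definition LDL_pair (Sigma : 'M[R]_p) (pi : 'S_p) : 'M[R]_p * 'M[R]_p :=
  epsilon (inhabits (0, 0)) (fun LD => is_LDL Sigma pi LD.1 LD.2).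

Definition Btilde (Sigma : 'M[R]_p) (pi : 'S_p) : 'M[R]_p :=
  permute pi^-1 (LDL_pair Sigma pi).1.

Definition Omegatilde (Sigma : 'M[R]_p) (pi : 'S_p) : 'M[R]_p :=
  permute pi^-1 (LDL_pair Sigma pi).2.

Definition min_trace_perm (Sigma : 'M[R]_p) (pi0 : 'S_p) : Prop :=
  forall pi : 'S_p, \tr (Omegatilde Sigma pi0) <= \tr (Omegatilde Sigma pi).

End Defs.

(* Main.v *)
Require Import Defs.
From mathcomp Require Import all_boot all_order all_algebra all_fingroup.
From mathcomp Require Import reals.
From Stdlib Require Import ClassicalEpsilon.
Set Implicit Arguments. Unset Strict Implicit. Unset Printing Implicit Defensive.
Import Order.TTheory GRing.Theory Num.Theory.
Local Open Scope ring_scope.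

Section Perm.
Variables (R : realType) (n : nat).
Implicit Types (A B : 'M[R]_n) (pi : 'S_n).

Lemma permuteM pi A B : permute pi (A *m B) = permute pi A *m permute pi B.
Proof.
apply/matrixP=> i j; rewrite !mxE (reindex_inj (@perm_inj _ pi)).
by apply: eq_bigr => l _; rewrite !mxE.
Qed.

Lemma permute1 pi : permute pi 1%:M = 1%:M :> 'M[R]_n.
Proof. by apply/matrixP=> i j; rewrite !mxE (inj_eq (@perm_inj _ pi)). Qed.

Lemma permuteB pi A B : permute pi (A - B) = permute pi A - permute pi B.
Proof. by apply/matrixP=> i j; rewrite !mxE. Qed.

Lemma permuteZ pi a A : permute pi (a *: A) = a *: permute pi A.
Proof. by apply/matrixP=> i j; rewrite !mxE. Qed.

Lemma permute_tr pi A : permute pi A^T = (permute pi A)^T.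
Proof. by apply/matrixP=> i j; rewrite !mxE. Qed.

Lemma permuteK pi A : permute pi^-1 (permute pi A) = A.
Proof. by apply/matrixP=> i j; rewrite !mxE !permKV. Qed.

Lemma permuteE pi A : permute pi A = perm_mx pi *m A *m perm_mx pi^-1.
Proof. by rewrite -row_permE -col_permE; apply/matrixP=> i j; rewrite !mxE. Qed.

Lemma det_permute pi A : \det (permute pi A) = \det A.
Proof.
rewrite permuteE !det_mulmx mulrC mulrA -det_mulmx -perm_mxM mulVg perm_mx1.
by rewrite det1 mul1r.
Qed.

Lemma tr_permute pi A : \tr (permute pi A) = \tr A.
Proof.
rewrite /mxtrace (reindex_inj (@perm_inj _ pi^-1)).
by apply: eq_bigr => i _; rewrite !mxE permKV.
Qed.

End Perm.

Section Topo.
Variables (R : realType) (n : nat).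

Lemma topo (B : 'M[R]_n) : is_DAG B -> exists pi : 'S_n, strictly_lower (permute pi B).
Proof.
move=> dag.
pose E := fun a b : 'I_n => B a b != 0.
pose r a := #|[set b | connect E a b]|.
have edge a b : E a b -> (r b < r a)%N.
  move=> eab; apply: proper_card; apply/properP; split.
    apply/subsetP => x; rewrite !inE => cbx.
    exact: connect_trans (connect1 eab) cbx.
  exists a; rewrite !inE ?connect0 //.
  exact: dag.
pose leT := fun a b : 'I_n => (r a <= r b)%N.
have leT_tr : transitive leT by move=> x y z; apply: leq_trans.
have leT_refl : reflexive leT by move=> x; apply: leqnn.
have leT_tot : total leT by move=> x y; apply: leq_total.
pose s := sort leT (enum 'I_n).
have ss : size s = n by rewrite size_sort size_enum_ord.
have us : uniq s by rewrite sort_uniq enum_uniq.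
have sos : sorted leT s by apply: sort_sorted.
pose f (i : 'I_n) := nth i s i.
have fE i x : f i = nth x s i by rewrite /f (set_nth_default x) // ss.
have f_inj : injective f.
  move=> i j; rewrite (fE i i) (fE j i) => /eqP.
  by rewrite nth_uniq ?ss // => /eqP /val_inj.
exists (perm f_inj) => i j lij; rewrite mxE !permE.
apply/eqP; apply: contraTT (isT : true) => nz.
have := edge _ _ nz.
rewrite (fE i i) (fE j i) ltnNge => /negP []. 
have := sorted_leq_nth leT_tr leT_refl i sos; apply => //; by rewrite inE ss.
Qed.

End Topo.

Section RowU.
Variables (R : realType) (n : nat).

Lemma split3 (F : 'I_n -> R) (k : 'I_n) :
  \sum_j F j = \sum_(j : 'I_n | (j < k)%N) F j + F k + \sum_(j : 'I_n | (k < j)%N) F j.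
Proof.
rewrite (bigID (fun j : 'I_n => (j < k)%N)) /= -addrA; congr (_ + _).
rewrite (bigD1 k) /= ?ltnn //; congr (_ + _); apply: eq_bigl => j.
case: ltngtP => //= [kj|/val_inj ->]; last by rewrite eqxx.
by apply/negP => /eqP jk; rewrite jk ltnn in kj.
Qed.

Lemma rowU (T G : 'M[R]_n) (e f : 'I_n -> R) :
  (forall i j : 'I_n, (i <= j)%N -> T i j = (i == j)%:R) ->
  (forall i, G i i = 1) ->
  (forall j, 0 < e j) -> (forall j, 0 < f j) ->
  (forall i k, \sum_j T i j * e j * T k j = \sum_j G i j * f j * G k j) ->
  (forall i j : 'I_n, (i < j)%N -> G i j = 0) \/ (forall j, e j = f j) ->
  forall k, (forall j, G k j = T k j) /\ e k = f k.
Proof.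
move=> Tul Gd ep fp K hcase.
have T0 (i j : 'I_n) : (i < j)%N -> T i j = 0.
  move=> lij; rewrite Tul ?(ltnW lij) //; case: eqP => [ij|_]; last by [].
  by rewrite ij ltnn in lij.
have T1 (i : 'I_n) : T i i = 1 by rewrite Tul ?eqxx.
suff H : forall m (k : 'I_n), (k < m)%N -> (forall j, G k j = T k j) /\ e k = f k.
  by move=> k; apply: (H k.+1).
elim=> [//|m IHm] k; rewrite ltnS leq_eqVlt => /orP [/eqP km|]; last exact: IHm.
have IH : forall i : 'I_n, (i < k)%N -> (forall j, G i j = T i j) /\ e i = f i.
  by move=> i; rewrite km; apply: IHm.
have a (i : 'I_n) : (i < k)%N -> \sum_j T i j * e j * (T k j - G k j) = 0.
  move=> ik; under eq_bigr do rewrite mulrBr.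
  rewrite sumrB K; apply/eqP; rewrite subr_eq0; apply/eqP.
  apply: eq_bigr => j _; have [ij|ji] := leqP (j : nat) i.
    have [G1 e1] := IH j (leq_ltn_trans ij ik).
    by rewrite (proj1 (IH i ik)) e1.
  by rewrite (proj1 (IH i ik)) T0 // !mul0r.
have b : forall j : 'I_n, (j < k)%N -> T k j = G k j.
  suff Hb : forall m (j : 'I_n), (j < m)%N -> (j < k)%N -> T k j = G k j.
    by move=> j; apply: (Hb j.+1).
  elim=> [//|m' IHm'] j; rewrite ltnS leq_eqVlt => /orP [/eqP jm|]; last exact: IHm'.
  move=> jk; have := a j jk; rewrite (bigD1 j) //= big1 ?addr0.
    rewrite T1 mul1r => /eqP; rewrite mulf_eq0 (gt_eqF (ep j)) /= subr_eq0.
    by move/eqP.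
  move=> l lj; have [lj'|jl] := ltnP l j.
    by rewrite IHm' ?subrr ?mulr0 // -?jm // (ltn_trans lj').
  rewrite T0 ?mul0r //; rewrite ltn_neqAle jl andbT.
  by apply/negP => /eqP /val_inj ljE; rewrite ljE eqxx in lj.
have Kk := K k k.
rewrite (split3 _ k) (split3 (fun j => G k j * f j * G k j) k) in Kk.
have e1 : \sum_(j : 'I_n | (j < k)%N) T k j * e j * T k j
        = \sum_(j : 'I_n | (j < k)%N) G k j * f j * G k j.
  by apply: eq_bigr => j jk; rewrite b // (proj2 (IH j jk)).
have e2 : \sum_(j : 'I_n | (k < j)%N) T k j * e j * T k j = 0.
  by apply: big1 => j kj; rewrite T0 // !mul0r.
rewrite e1 e2 T1 Gd addr0 !mulr1 !mul1r in Kk.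
case: hcase => [Gl|ef].
  have e3 : \sum_(j : 'I_n | (k < j)%N) G k j * f j * G k j = 0.
    by apply: big1 => j kj; rewrite Gl // !mul0r.
  rewrite e3 addr0 in Kk; split; last by move/addrI: Kk.
  move=> j; have [jk|kj|/val_inj ->] := ltngtP j k; first by rewrite b.
    by rewrite Gl // T0.
  by rewrite Gd T1.
rewrite ef in Kk; move/eqP: Kk; rewrite -subr_eq0 opprD addrA subrr add0r.
rewrite oppr_eq0 psumr_eq0 => [/allP Hall|j _]; last first.
  by rewrite mulrAC -expr2 mulr_ge0 ?sqr_ge0 ?ltW.
split => // j; have [jk|kj|/val_inj ->] := ltngtP j k; first by rewrite b.
  have := Hall j (mem_index_enum j); rewrite kj /= mulrAC mulf_eq0 (gt_eqF (fp j)) /=.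
  by rewrite orbF mulf_eq0 orbb T0 // => /eqP.
by rewrite Gd T1.
Qed.

End RowU.

Section Elim.
Variables (R : realType) (n : nat).

Lemma inv_eq (A B : 'M[R]_n) : A *m B = 1%:M -> invmx A = B.
Proof.
move=> AB; have [uA _] := mulmx1_unit AB.
by rewrite -[RHS](mulKmx uA B) AB mulmx1.
Qed.

Lemma invmx_diag (d : 'rV[R]_n) : (forall i, d 0 i != 0) ->
  invmx (diag_mx d) = diag_mx (\row_i (d 0 i)^-1).
Proof.
move=> nz; apply: inv_eq; rewrite mulmx_diag; apply/matrixP => i j.
by rewrite !mxE mulfV.
Qed.

Lemma rowsq_pos (H : 'M[R]_n) i : H \in unitmx -> 0 < (H *m H^T) i i.
Proof.
move=> uH; rewrite mxE.
have ge0 : forall l, 0 <= H i l * H^T l i by move=> l; rewrite mxE -expr2 sqr_ge0.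
rewrite lt_def sumr_ge0 ?andbT //; apply/negP => /eqP /psumr_eq0P h0.
have := mulmxV uH; move/matrixP => /(_ i i); rewrite !mxE eqxx /= big1 //.
  by move/eqP; rewrite eq_sym oner_eq0.
move=> l _; have := h0 (fun l _ => ge0 l) l isT; rewrite mxE => /eqP; rewrite mulf_eq0 orbb => /eqP ->.
by rewrite mul0r.
Qed.

Definition ul (A : 'M[R]_n) := forall i j : 'I_n, (i <= j)%N -> A i j = (i == j)%:R.

Lemma elim_step m (A H G : 'M[R]_n) (hm : (m < n)%N) :
  ul A -> H \in unitmx -> A *m H = G ->
  (forall i j : 'I_n, i != j -> (i < m)%N || (j < m)%N -> (H *m H^T) i j = 0) ->
  exists A' H', [/\ ul A', H' \in unitmx, A' *m H' = G &
  (forall i j : 'I_n, i != j -> (i < m.+1)%N || (j < m.+1)%N -> (H' *m H'^T) i j = 0)].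
Proof.
move=> ulA uH AHG Nz.
pose k := Ordinal hm.
pose N := H *m H^T.
pose c := N k k.
have cpos : 0 < c by apply: rowsq_pos.
have Nsym i j : N i j = N j i by rewrite /N !mxE; apply: eq_bigr => l _; rewrite !mxE mulrC.
pose S := \matrix_(i, j) (if (j == k) && (k < i)%N then N i k / c else 0) : 'M[R]_n.
have SX (X : 'M[R]_n) i j : (S *m X) i j = S i k * X k j.
  rewrite mxE (bigD1 k) //= big1 ?addr0 // => l lk.
  by rewrite mxE (negPf lk) /= mul0r.
have XST (X : 'M[R]_n) i j : (X *m S^T) i j = X i k * S j k.
  rewrite mxE (bigD1 k) //= big1 ?addr0 ?mxE // => l lk.
  by rewrite !mxE (negPf lk) /= mulr0.
have S2 : S *m S = 0.
  by apply/matrixP => i j; rewrite SX [S k j]mxE ltnn andbF mulr0 mxE.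
have EF : (1%:M + S) *m (1%:M - S) = 1%:M.
  by rewrite mulmxDl !mulmxBr !mul1mx mulmx1 S2 subr0 subrK.
exists (A *m (1%:M + S)), ((1%:M - S) *m H); split.
- move=> i j ij; rewrite mulmxDr mulmx1 mxE [X in _ + X]mxE big1 ?addr0 ?ulA //.
  move=> l _; rewrite [S l j]mxE; case: ifP => [/andP [/eqP jk kl]|_]; last by rewrite mulr0.
  rewrite ulA; last by apply: ltnW; apply: leq_ltn_trans kl; rewrite -jk.
  case: eqP => [il|_]; last by rewrite mul0r.
  by move: kl; rewrite -il -jk ltnNge ij.
- rewrite unitmx_mul uH andbT; exact: (proj2 (mulmx1_unit EF)).
- by rewrite mulmxA -(mulmxA A) EF mulmx1.
move=> i j ij hij.
have -> : (1%:M - S) *m H *m ((1%:M - S) *m H)^T = (1%:M - S) *m N *m (1%:M - S)^T.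
  by rewrite trmx_mul !mulmxA.
have Sik (x : 'I_n) : S x k = if (k < x)%N then N x k / c else 0 by rewrite mxE eqxx.
have E1 : (1%:M - S)^T = 1%:M - S^T by rewrite linearB /= trmx1.
have key (X : 'M[R]_n) (x y : 'I_n) : ((1%:M - S) *m X *m (1%:M - S)^T) x y =
   (X x y - S x k * X k y) - (X x k - S x k * X k k) * S y k.
  rewrite E1 mulmxBr mulmx1 mulmxBl mul1mx.
  set Y := X - S *m X.
  have hY a b : Y a b = X a b - S a k * X k b by rewrite /Y mxE [X in _ + X]mxE SX.
  by rewrite mxE [X in _ + X]mxE XST !hY.
rewrite key -/c.
have Nz' (x y : 'I_n) : x != y -> (x < k)%N || (y < k)%N -> N x y = 0 by apply: Nz.
have ne (x y : 'I_n) : (x < y)%N -> x != y.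
  by move=> h; apply/negP => /eqP e; rewrite e ltnn in h.
have [ik|ki|ik] := ltngtP i k.
- rewrite (Sik i) ltnNge (ltnW ik) /= !mul0r !subr0 (Nz' i j ij) ?ik //.
  by rewrite (Nz' i k (ne _ _ ik)) ?ik // mul0r subrr.
- have jk : (j <= k)%N by move: hij; rewrite !ltnS leqNgt ki.
  move: jk; rewrite leq_eqVlt => /orP [/eqP jk|jk].
    have -> : j = k by apply: val_inj.
    rewrite (Sik k) ltnn mulr0 subr0 (Sik i) ki mulfVK ?subrr // gt_eqF //.
  rewrite (Sik j) ltnNge (ltnW jk) /= mulr0 subr0.
  rewrite (Nz' i j ij) ?jk ?orbT // (Nz' k j) ?jk ?orbT ?mulr0 ?subrr //.
  by rewrite eq_sym ne.
- have ikE : i = k by apply: val_inj.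
  rewrite ikE; have [jk|kj|jk] := ltngtP j k.
  + rewrite (Sik j) ltnNge (ltnW jk) /= mulr0 subr0.
    rewrite (Sik k) ltnn mul0r subr0 (Nz' k j) ?jk ?orbT //.
    by rewrite eq_sym ne.
  + rewrite (Sik k) ltnn mul0r !subr0 (Sik j) kj -/c mul0r subr0 mulrCA mulfV ?gt_eqF // mulr1.
    by rewrite Nsym subrr.
  + have jkE : j = k by apply: val_inj.
    by move: ij; rewrite ikE jkE eqxx.
Qed.

End Elim.

Section LDL.
Variables (R : realType) (n : nat).

Lemma elim_all (G : 'M[R]_n) : G \in unitmx ->
  exists A H : 'M[R]_n, [/\ ul A, H \in unitmx, A *m H = G &
    (forall i j : 'I_n, i != j -> (H *m H^T) i j = 0)].
Proof.
move=> uG.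
suff P : forall m, (m <= n)%N -> exists A H : 'M[R]_n, [/\ ul A, H \in unitmx, A *m H = G &
    (forall i j : 'I_n, i != j -> (i < m)%N || (j < m)%N -> (H *m H^T) i j = 0)].
  have [A [H [uA uH AH Hd]]] := P n (leqnn n).
  by exists A, H; split => // i j ij; apply: Hd; rewrite ?ltn_ord.
elim=> [_|m IH hm].
  exists 1%:M, G; split => //; first by move=> i j _; rewrite mxE.
  by rewrite mul1mx.
have [A [H [uA uH AH Hd]]] := IH (ltnW hm).
exact: (elim_step hm uA uH AH Hd).
Qed.

Lemma invmx_diagN (N : 'M[R]_n) : (forall i, 0 < N i i) ->
  (forall i j, i != j -> N i j = 0) -> invmx (diag_mx (\row_i (N i i)^-1)) = N.
Proof.
move=> Np Nd; rewrite invmx_diag; last by move=> i; rewrite mxE invr_eq0 gt_eqF.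
apply/matrixP => i j; rewrite !mxE invrK.
case: (eqVneq i j) => [->|ij]; first by rewrite mulr1n.
by rewrite mulr0n Nd.
Qed.

Lemma ldl_exists (G : 'M[R]_n) (a : R) : 0 < a -> G \in unitmx ->
  exists L D : 'M[R]_n, [/\ strictly_lower L, pos_diag D &
    a *: (G *m G^T) = (1%:M - L) *m invmx D *m (1%:M - L)^T].
Proof.
move=> apos uG; have [A [H [uA uH AHG Hd]]] := elim_all uG.
pose N := a *: (H *m H^T).
have Npos i : 0 < N i i by rewrite mxE mulr_gt0 // rowsq_pos.
pose D := diag_mx (\row_i (N i i)^-1).
exists (1%:M - A), D; split.
- by move=> i j ij; rewrite !mxE uA // subrr.
- split; first exact: diag_mx_is_diag.
  by move=> i; have := Npos i; rewrite /D /N !mxE eqxx mulr1n invr_gt0.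
have -> : invmx D = N.
  apply: invmx_diagN; first exact: Npos.
  by move=> i j ij; rewrite /N mxE Hd // mulr0.
rewrite opprB (addrC 1%:M) subrK.
rewrite -AHG trmx_mul /N -scalemxAr -!scalemxAl.
by rewrite !mulmxA.
Qed.

End LDL.

Section Main.
Variables (R : realType) (n : nat).

Lemma det_unit_lower (L : 'M[R]_n) : strictly_lower L -> \det (1%:M - L) = 1.
Proof.
move=> sl; rewrite det_trig.
  by apply: big1 => i _; rewrite !mxE eqxx sl // subr0.
apply/is_trig_mxP => i j ij; rewrite !mxE sl ?(ltnW ij) // subr0.
by case: eqP => // e; rewrite e ltnn in ij.
Qed.

Lemma diag_of (D : 'M[R]_n) : is_diag_mx D -> D = diag_mx (\row_i D i i).
Proof.
move/is_diag_mxP => Dd; apply/matrixP => i j; rewrite !mxE.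
by case: (eqVneq i j) => [->|ij]; rewrite ?mulr1n // mulr0n Dd.
Qed.

Lemma ldl_sums (L D G : 'M[R]_n) a : pos_diag D ->
  (1%:M - L) *m invmx D *m (1%:M - L)^T = a *: (G *m G^T) ->
  forall i k, \sum_j (1%:M - L) i j * (D j j)^-1 * (1%:M - L) k j
            = \sum_j G i j * a * G k j.
Proof.
move=> [Dd Dp]; rewrite [D in invmx D]diag_of // invmx_diag; last first.
  by move=> i; rewrite mxE gt_eqF.
move=> E i k.
have mulT (X Y : 'M[R]_n) x y : (X *m Y^T) x y = \sum_j X x j * Y y j.
  by rewrite mxE; apply: eq_bigr => j _; rewrite mxE.
have := congr1 (fun M : 'M[R]_n => M i k) E; rewrite /= mulT.
rewrite [X in _ = X]mxE mulT mulr_sumr => E2.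
transitivity (\sum_j ((1%:M - L) *m diag_mx (\row_i ((\row_i0 D i0 i0) 0 i)^-1)) i j * (1%:M - L) k j).
  by apply: eq_bigr => j _; rewrite mul_mx_diag !mxE.
by rewrite E2; apply: eq_bigr => j _; rewrite mulrCA mulrA.
Qed.

End Main.

Unset Implicit Arguments.

Theorem lemma3 (R : realType) (p : nat) (Sigma B0 : 'M[R]_p) (omega0 : R) :
  posdef Sigma ->
  is_DAG B0 ->
  0 < omega0 ->
  Sigma = (invmx (1%:M - B0))^T *m (omega0 ^+ 2)%:M *m invmx (1%:M - B0) ->
  forall pi0 : 'S_p, min_trace_perm Sigma pi0 -> Btilde Sigma pi0 = B0.
Proof.
move=> _ dag wpos HS pi0 mt.
have [p0|ppos] := posnP p.
  by apply/matrixP => i; have := ltn_ord i; rewrite {2}p0.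
set C := 1%:M - B0 in HS *.
have [pis Hpis] := topo dag.
have detC : \det C = 1.
  rewrite -(det_permute pis) /C permuteB permute1.
  exact: det_unit_lower.
have uC : C \in unitmx by rewrite unitmxE detC unitr1.
set w := omega0 ^+ 2.
have wpos' : 0 < w by rewrite exprn_gt0.
set a := w^-1.
have apos : 0 < a by rewrite invr_gt0.
have invS : invmx Sigma = a *: (C *m C^T).
  apply: inv_eq; rewrite HS -!mulmxA -scalemxAr [invmx C *m _]mulmxA mulVmx // mul1mx.
  rewrite mul_scalar_mx scalerA divff ?gt_eqF // scale1r.
  by rewrite -trmx_mul mulmxV // trmx1.
pose G pi := permute pi C.
have GE pi : permute pi (invmx Sigma) = a *: (G pi *m (G pi)^T).
  by rewrite invS permuteZ permuteM permute_tr.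
have uG pi : G pi \in unitmx by rewrite unitmxE det_permute detC unitr1.
have LDLok pi : is_LDL Sigma pi (LDL_pair Sigma pi).1 (LDL_pair Sigma pi).2.
  have [L [D [H1 H2 H3]]] := ldl_exists apos (uG pi).
  rewrite /LDL_pair; apply: (@epsilon_spec _ (inhabits (0, 0))
     (fun LD : 'M[R]_p * 'M[R]_p => is_LDL Sigma pi LD.1 LD.2)).
  by exists (L, D); split => //; rewrite GE.
have B0d x : B0 x x = 0.
  apply/eqP; apply: contraT => nz; have := dag x x nz; by rewrite connect0.
have Gd pi i : G pi i i = 1 by rewrite /G /C !mxE eqxx B0d subr0.
have Dp pi j : 0 < (LDL_pair Sigma pi).2 j j.
  by have [_ [_ Dp] _] := LDLok pi; apply: Dp.
have Tul pi : forall i j : 'I_p, (i <= j)%N ->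
    (1%:M - (LDL_pair Sigma pi).1) i j = (i == j)%:R.
  by have [sl _ _] := LDLok pi; move=> i j ij; rewrite !mxE sl // subr0.
have sums pi : forall i k, \sum_j (1%:M - (LDL_pair Sigma pi).1) i j
      * ((LDL_pair Sigma pi).2 j j)^-1 * (1%:M - (LDL_pair Sigma pi).1) k j
            = \sum_j G pi i j * a * G pi k j.
  have [_ pd eq] := LDLok pi; apply: ldl_sums pd _.
  by rewrite -eq GE.
have ep pi j : 0 < ((LDL_pair Sigma pi).2 j j)^-1 by rewrite invr_gt0.
have Dstar j : (LDL_pair Sigma pis).2 j j = w.
  have Gl : forall i j : 'I_p, (i < j)%N -> G pis i j = 0.
    move=> i k ik; have := Hpis i k (ltnW ik); rewrite /G /C !mxE => ->.
    rewrite (inj_eq (@perm_inj _ pis)) subr0.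
    by case: eqP => // e; rewrite e ltnn in ik.
  have [_ ej] := rowU (e := fun j => ((LDL_pair Sigma pis).2 j j)^-1)
     (f := fun _ => a) (Tul pis) (Gd pis) (ep pis) (fun _ => apos) (sums pis) (or_introl Gl) j.
  by rewrite -[LHS]invrK ej /a invrK.
have trstar : \tr (Omegatilde Sigma pis) = w *+ p.
  rewrite /Omegatilde tr_permute /mxtrace (eq_bigr (fun _ => w)); last by move=> j _; apply: Dstar.
  by rewrite sumr_const card_ord.
have trle := mt pis.
rewrite trstar /Omegatilde tr_permute /mxtrace in trle.
set D0 := (LDL_pair Sigma pi0).2 in trle *.
set L0 := (LDL_pair Sigma pi0).1.
have [sl0 pd0 eq0] := LDLok pi0.
rewrite GE -/D0 -/L0 in eq0.
have detD0 : \prod_j D0 j j = w ^+ p.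
  have := congr1 determinant eq0.
  rewrite detZ !det_mulmx det_tr det_permute detC mulr1 det_tr det_unit_lower //.
  rewrite mulr1 mul1r det_inv [D0 in \det D0](diag_of pd0.1) det_diag !mulr1 -/D0 => h.
  have -> : \prod_j D0 j j = \prod_i (\row_i D0 i i) 0 i by apply: eq_bigr => j _; rewrite mxE.
  by rewrite -[LHS]invrK -h /a exprVn invrK.
have agm := leif_AGM (A := predT) (E := fun j => D0 j j) (fun j _ => ltW (Dp pi0 j)).
have e1 : \prod_(i in predT) D0 i i = \prod_i D0 i i by apply: eq_bigl.
have e2 : \sum_(i in predT) D0 i i = \sum_i D0 i i by apply: eq_bigl.
have cT : #|[pred i : 'I_p | predT i]| = p by rewrite cardT size_enum_ord.
move: agm; rewrite /= e1 e2 cT detD0 => agm.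
have pR : 0 < p%:R :> R by rewrite ltr0n.
have mule : (\sum_i D0 i i) / p%:R <= w by rewrite ler_pdivrMr // mulr_natr.
have mu0 : 0 <= (\sum_i D0 i i) / p%:R.
  by apply: divr_ge0; [apply: sumr_ge0 => j _; exact: ltW (Dp pi0 j) | exact: ltW pR].
have eqmu : w ^+ p == ((\sum_i D0 i i) / p%:R) ^+ p.
  by rewrite eq_le agm.1 /=; apply: lerXn2r => //; rewrite qualifE /= ?mu0 ?(ltW wpos').
have allEq : forall i j : 'I_p, D0 i i = D0 j j.
  move=> i j; move: eqmu; rewrite agm.2 => /forallP /(_ i) /implyP /(_ isT).
  by move=> /forallP /(_ j) /implyP /(_ isT) /eqP.
pose j0 := Ordinal ppos.
have Dw : forall j, D0 j j = w.
  move=> j; rewrite (allEq j j0).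
  have hc : D0 j0 j0 ^+ p = w ^+ p.
    rewrite -detD0 (eq_bigr (fun _ => D0 j0 j0)); last by move=> k _; rewrite (allEq k j0).
    by rewrite prodr_const card_ord.
  apply/eqP; rewrite -(eqrXn2 ppos) ?hc //; [exact: ltW (Dp pi0 j0) | exact: ltW wpos'].
have ea j : (D0 j j)^-1 = a by rewrite Dw.
have H0 := rowU (e := fun j => (D0 j j)^-1) (f := fun _ => a)
   (Tul pi0) (Gd pi0) (ep pi0) (fun _ => apos) (sums pi0) (or_intror ea).
have L0E : L0 = permute pi0 B0.
  apply/matrixP => k j; have [/(_ j) h _] := H0 k.
  move: h; rewrite /G /C !mxE (inj_eq (@perm_inj _ pi0)).
  by move/addrI/oppr_inj.
by rewrite /Btilde -/L0 L0E permuteK.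
Qed.
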